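(* Let $\alpha\in\mathbb R$ and let $(x(s),z(s),\psi(s))$ be a solution of the system $$x'=\cos\psi,\quad z'=\sin\psi,\quad \psi'=\alpha\,\frac{z\cos\psi-x\sin\psi}{x^2+z^2}-\frac{\sin\psi}{x},$$ with initial conditions $(x(0),z(0))=(1,0)$, $\psi(0)=\pi/2$. Then the curve $\gamma(s)=(x(s),0,z(s))$ is symmetric about the $x$-axis.
   Context: The system describes the arc-length parametrized generating curve $\gamma$ of a surface of revolution about the $z$-axis satisfying $H=\alpha\langle\nu,p\rangle/|p|^2$ ($H$ the sum of the principal curvatures); the initial conditions mean $\gamma$ meets the $x$-axis orthogonally at $(1,0,0)$. *)

(* Defs.v *)
From Stdlib Require Import Reals.
From Coquelicot Require Import Coquelicot.
Open Scope R_scope.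

Definition is_solution (alpha a b : R) (x z psi : R -> R) : Prop :=
  forall s, a < s < b ->
    x s <> 0 /\
    is_derive x s (cos (psi s)) /\
    is_derive z s (sin (psi s)) /\
    is_derive psi s
      (alpha * (z s * cos (psi s) - x s * sin (psi s)) / (x s ^ 2 + z s ^ 2)
       - sin (psi s) / x s).

(* Main.v *)
Require Import Defs.
From Stdlib Require Import Reals Lra.
From Coquelicot Require Import Coquelicot.
Open Scope R_scope.

Lemma sin_lip p q : Rabs (sin p - sin q) <= Rabs (p - q).
Proof.
  destruct (MVT_gen sin q p cos) as [c [_ Hc]].
  - intros; apply is_derive_sin.
  - intros; apply continuity_sin.
  - rewrite Hc, Rabs_mult.
    rewrite <- (Rmult_1_l (Rabs (p - q))) at 2.
    apply Rmult_le_compat_r; [apply Rabs_pos|].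
    apply Rabs_le; pose proof (COS_bound c); lra.
Qed.

Lemma cos_lip p q : Rabs (cos p - cos q) <= Rabs (p - q).
Proof.
  destruct (MVT_gen cos q p (fun t => - sin t)) as [c [_ Hc]].
  - intros; apply is_derive_cos.
  - intros; apply continuity_cos.
  - rewrite Hc, Rabs_mult.
    rewrite <- (Rmult_1_l (Rabs (p - q))) at 2.
    apply Rmult_le_compat_r; [apply Rabs_pos|].
    apply Rabs_le; pose proof (SIN_bound c); lra.
Qed.

Definition F (alpha x z p : R) :=
  alpha * (z * cos p - x * sin p) / (x ^ 2 + z ^ 2) - sin p / x.

Lemma abs_div_le u b U B : 0 < B -> B <= Rabs b -> Rabs u <= U -> Rabs (u / b) <= U / B.
Proof.
  intros HB Hb Hu. assert (b <> 0) by (intro; subst; rewrite Rabs_R0 in Hb; lra).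
  unfold Rdiv; rewrite Rabs_mult, Rabs_inv.
  apply Rmult_le_compat; try apply Rabs_pos.
  - left; apply Rinv_0_lt_compat; apply Rabs_pos_lt; auto.
  - auto.
  - apply Rinv_le_contravar; auto.
Qed.

Lemma abs_mul_le a b A B : Rabs a <= A -> Rabs b <= B -> Rabs (a * b) <= A * B.
Proof.
  intros; rewrite Rabs_mult; apply Rmult_le_compat; try apply Rabs_pos; auto.
Qed.

Lemma abs4 a b c d : Rabs (a + b - c - d) <= Rabs a + Rabs b + Rabs c + Rabs d.
Proof.
  unfold Rminus. eapply Rle_trans; [apply Rabs_triang|].
  rewrite Rabs_Ropp.
  eapply Rle_trans; [apply Rplus_le_compat_r; apply Rabs_triang|].
  rewrite Rabs_Ropp.
  eapply Rle_trans; [apply Rplus_le_compat_r; apply Rplus_le_compat_r; apply Rabs_triang|].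
  lra.
Qed.

Lemma F_lip alpha m M x z p X Z q :
  0 < m -> m <= Rabs x -> m <= Rabs X -> Rabs x <= M -> Rabs z <= M ->
  Rabs X <= M -> Rabs Z <= M ->
  Rabs (F alpha x z p - F alpha X Z q) <=
  (Rabs alpha * ((2 + 2*M)/(m*m) + (2*M*(2*M))/(m*m*(m*m))) + 1/m + 1/(m*m))
  * (Rabs (x - X) + Rabs (z - Z) + Rabs (p - q)).
Proof.
  intros Hm Hx HX Hxm Hzm HXm HZm.
  set (S := Rabs (x - X) + Rabs (z - Z) + Rabs (p - q)).
  assert (Sx : Rabs (x - X) <= S) by (unfold S; pose proof (Rabs_pos (z-Z)); pose proof (Rabs_pos (p-q)); lra).
  assert (Sz : Rabs (z - Z) <= S) by (unfold S; pose proof (Rabs_pos (x-X)); pose proof (Rabs_pos (p-q)); lra).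
  assert (Sp : Rabs (p - q) <= S) by (unfold S; pose proof (Rabs_pos (z-Z)); pose proof (Rabs_pos (x-X)); lra).
  assert (S0 : 0 <= S) by (pose proof (Rabs_pos (p-q)); lra).
  assert (M0 : 0 <= M) by (pose proof (Rabs_pos x); lra).
  assert (x0 : x <> 0) by (intro; subst; rewrite Rabs_R0 in Hx; lra).
  assert (X0 : X <> 0) by (intro; subst; rewrite Rabs_R0 in HX; lra).
  assert (D1p : m * m <= x ^ 2 + z ^ 2).
  { assert (m * m <= Rabs x * Rabs x) by (apply Rmult_le_compat; lra).
    rewrite <- Rabs_mult, Rabs_pos_eq in H by (apply Rle_0_sqr). simpl. nra. }
  assert (D2p : m * m <= X ^ 2 + Z ^ 2).
  { assert (m * m <= Rabs X * Rabs X) by (apply Rmult_le_compat; lra).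
    rewrite <- Rabs_mult, Rabs_pos_eq in H by (apply Rle_0_sqr). simpl. nra. }
  assert (mm : 0 < m * m) by nra.
  assert (D1a : m * m <= Rabs (x ^ 2 + z ^ 2)) by (rewrite Rabs_pos_eq; lra).
  assert (D12a : m * m * (m * m) <= Rabs ((x ^ 2 + z ^ 2) * (X ^ 2 + Z ^ 2))).
  { rewrite Rabs_pos_eq by nra. apply Rmult_le_compat; lra. }
  assert (Eh : sin p / x - sin q / X = (sin p - sin q) / x + sin q * (X - x) / (x * X))
    by (field; auto).
  assert (Bh1 : Rabs ((sin p - sin q) / x) <= S / m).
  { apply abs_div_le; auto. eapply Rle_trans; [apply sin_lip|auto]. }
  assert (Bh2 : Rabs (sin q * (X - x) / (x * X)) <= 1 * S / (m * m)).
  { apply abs_div_le; auto.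
    - rewrite Rabs_mult; apply Rmult_le_compat; lra.
    - apply abs_mul_le; [apply Rabs_le; pose proof (SIN_bound q); lra|].
      rewrite Rabs_minus_sym; auto. }
  set (N1 := z * cos p - x * sin p). set (N2 := Z * cos q - X * sin q).
  set (D1 := x ^ 2 + z ^ 2). set (D2 := X ^ 2 + Z ^ 2).
  assert (D1n : D1 <> 0) by (unfold D1; lra).
  assert (D2n : D2 <> 0) by (unfold D2; lra).
  assert (Eg : alpha * N1 / D1 - alpha * N2 / D2 = alpha * ((N1 - N2) / D1 + N2 * (D2 - D1) / (D1 * D2)))
    by (field; auto).
  assert (BN : Rabs (N1 - N2) <= (2 + 2 * M) * S).
  { replace (N1 - N2) with ((z - Z) * cos p + Z * (cos p - cos q) - (x - X) * sin p - X * (sin p - sin q))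
      by (unfold N1, N2; ring).
    eapply Rle_trans; [apply abs4|].
    assert (Rabs ((z - Z) * cos p) <= S * 1)
      by (apply abs_mul_le; auto; apply Rabs_le; pose proof (COS_bound p); lra).
    assert (Rabs (Z * (cos p - cos q)) <= M * S)
      by (apply abs_mul_le; auto; eapply Rle_trans; [apply cos_lip|auto]).
    assert (Rabs ((x - X) * sin p) <= S * 1)
      by (apply abs_mul_le; auto; apply Rabs_le; pose proof (SIN_bound p); lra).
    assert (Rabs (X * (sin p - sin q)) <= M * S)
      by (apply abs_mul_le; auto; eapply Rle_trans; [apply sin_lip|auto]).
    lra. }
  assert (BN2 : Rabs N2 <= 2 * M).
  { unfold N2, Rminus. eapply Rle_trans; [apply Rabs_triang|]. rewrite Rabs_Ropp.
    assert (Rabs (Z * cos q) <= M * 1)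
      by (apply abs_mul_le; auto; apply Rabs_le; pose proof (COS_bound q); lra).
    assert (Rabs (X * sin q) <= M * 1)
      by (apply abs_mul_le; auto; apply Rabs_le; pose proof (SIN_bound q); lra).
    lra. }
  assert (BD : Rabs (D2 - D1) <= 2 * M * S).
  { replace (D2 - D1) with ((X - x) * (X + x) + (Z - z) * (Z + z)) by (unfold D1, D2; ring).
    eapply Rle_trans; [apply Rabs_triang|].
    assert (Rabs ((X - x) * (X + x)) <= Rabs (x - X) * (2 * M)).
    { rewrite Rabs_minus_sym. apply abs_mul_le; [lra|].
      eapply Rle_trans; [apply Rabs_triang|lra]. }
    assert (Rabs ((Z - z) * (Z + z)) <= Rabs (z - Z) * (2 * M)).
    { rewrite Rabs_minus_sym. apply abs_mul_le; [lra|].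
      eapply Rle_trans; [apply Rabs_triang|lra]. }
    unfold S in *. pose proof (Rabs_pos (p - q)). nra. }
  assert (Bg1 : Rabs ((N1 - N2) / D1) <= (2 + 2 * M) * S / (m * m)) by (apply abs_div_le; auto).
  assert (Bg2 : Rabs (N2 * (D2 - D1) / (D1 * D2)) <= 2 * M * (2 * M * S) / (m * m * (m * m))).
  { apply abs_div_le; [nra|auto|]. apply abs_mul_le; auto. }
  unfold F. fold N1 N2 D1 D2.
  replace (alpha * N1 / D1 - sin p / x - (alpha * N2 / D2 - sin q / X))
    with ((alpha * N1 / D1 - alpha * N2 / D2) - (sin p / x - sin q / X)) by ring.
  rewrite Eg, Eh.
  unfold Rminus. eapply Rle_trans; [apply Rabs_triang|]. rewrite Rabs_Ropp, Rabs_mult.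
  assert (Rabs ((N1 + - N2) / D1 + N2 * (D2 + - D1) / (D1 * D2)) <=
          (2 + 2 * M) * S / (m * m) + 2 * M * (2 * M * S) / (m * m * (m * m))).
  { eapply Rle_trans; [apply Rabs_triang|]. unfold Rminus in *; lra. }
  assert (Rabs ((sin p + - sin q) / x + sin q * (X + - x) / (x * X)) <= S / m + 1 * S / (m * m)).
  { eapply Rle_trans; [apply Rabs_triang|]. unfold Rminus in *; lra. }
  assert (Rabs alpha * Rabs ((N1 + - N2) / D1 + N2 * (D2 + - D1) / (D1 * D2)) <=
          Rabs alpha * ((2 + 2 * M) * S / (m * m) + 2 * M * (2 * M * S) / (m * m * (m * m)))).
  { apply Rmult_le_compat_l; auto. apply Rabs_pos. }
  replace ((Rabs alpha * ((2 + 2 * M) / (m * m) + 2 * M * (2 * M) / (m * m * (m * m))) + 1 / m + 1 / (m * m)) * S)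
    with (Rabs alpha * ((2 + 2 * M) * S / (m * m) + 2 * M * (2 * M * S) / (m * m * (m * m))) + (S / m + 1 * S / (m * m)))
    by (field; lra).
  lra.
Qed.

Lemma is_derive_eq (f : R -> R) t l l' : is_derive f t l -> l = l' -> is_derive f t l'.
Proof. intros H ->; exact H. Qed.

Lemma der_cont (f : R -> R) t l : is_derive f t l -> continuity_pt f t.
Proof. intro H. apply continuity_pt_filterlim. apply (ex_derive_continuous (K:=R_AbsRing) (V:=R_NormedModule) f t). exists l; exact H. Qed.

Lemma der_sub (f g : R -> R) t df dg : is_derive f t df -> is_derive g t dg ->
  is_derive (fun u => f u - g u) t (df - dg).
Proof. intros. apply (is_derive_minus f g t df dg); auto. Qed.

Lemma der_add (f g : R -> R) t df dg : is_derive f t df -> is_derive g t dg ->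
  is_derive (fun u => f u + g u) t (df + dg).
Proof. intros. apply (is_derive_plus f g t df dg); auto. Qed.

Lemma der_sq (f : R -> R) t df : is_derive f t df ->
  is_derive (fun u => f u ^ 2) t (2 * f t * df).
Proof. intros. eapply is_derive_eq. apply (is_derive_pow f 2 t df H). simpl; ring. Qed.

Lemma der_mul (f g : R -> R) t df dg : is_derive f t df -> is_derive g t dg ->
  is_derive (fun u => f u * g u) t (df * g t + f t * dg).
Proof. intros. apply Derive.is_derive_mult; auto. Qed.

Lemma der_neg (f : R -> R) t df : is_derive f t df -> is_derive (fun u => f (- u)) (- t) (- df).
Proof.
  intros. eapply is_derive_eq. apply (is_derive_comp f Ropp (-t) df (-1)).
  rewrite Ropp_involutive; auto.
  assert (H1 : is_derive (fun y : R => - y) (-t) (-1)) by (auto_derive; auto; ring). exact H1.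
  unfold scal; simpl; unfold mult; simpl; ring.
Qed.

Lemma der_opp (f : R -> R) t df : is_derive f t df -> is_derive (fun u => - f u) t (- df).
Proof.
  intros. eapply is_derive_eq.
  apply (is_derive_opp (K:=R_AbsRing) (V:=R_NormedModule) f t df H). reflexivity.
Qed.

Lemma core alpha a b x z psi s :
  a < 0 < b -> is_solution alpha a b x z psi ->
  x 0 = 1 -> z 0 = 0 -> psi 0 = PI / 2 ->
  0 <= s -> s < b -> a < - s ->
  x (- s) = x s /\ z (- s) = - z s.
Proof.
  intros Hab Hsol Hx0 Hz0 Hp0 Hs Hsb Has.
  set (Xf := fun t => x (- t)). set (Zf := fun t => - z (- t)). set (Qf := fun t => PI - psi (- t)).
  assert (In : forall t, -s <= t <= s -> a < t < b) by (intros; lra).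
  assert (Dx : forall t, -s <= t <= s -> is_derive x t (cos (psi t))) by (intros t Ht; apply (Hsol t (In t Ht))).
  assert (Dz : forall t, -s <= t <= s -> is_derive z t (sin (psi t))) by (intros t Ht; apply (Hsol t (In t Ht))).
  assert (Dp : forall t, -s <= t <= s -> is_derive psi t (F alpha (x t) (z t) (psi t))) by (intros t Ht; apply (Hsol t (In t Ht))).
  assert (Nx : forall t, -s <= t <= s -> x t <> 0) by (intros t Ht; apply (Hsol t (In t Ht))).
  assert (DX : forall t, -s <= t <= s -> is_derive Xf t (cos (Qf t))).
  { intros t Ht. unfold Xf, Qf. eapply is_derive_eq.
    rewrite <- (Ropp_involutive t) at 1. apply der_neg. apply Dx; lra.
    symmetry; apply Rtrigo_facts.cos_pi_minus. }
  assert (DZ : forall t, -s <= t <= s -> is_derive Zf t (sin (Qf t))).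
  { intros t Ht. unfold Zf, Qf. eapply is_derive_eq.
    rewrite <- (Ropp_involutive t) at 1. apply der_opp. apply der_neg. apply Dz; lra.
    rewrite sin_PI_x; apply Ropp_involutive. }
  assert (DQ : forall t, -s <= t <= s -> is_derive Qf t (F alpha (Xf t) (Zf t) (Qf t))).
  { intros t Ht. unfold Xf, Zf, Qf. eapply is_derive_eq.
    rewrite <- (Ropp_involutive t) at 1. apply der_sub. apply is_derive_const. apply der_neg. apply Dp; lra.
    change (@eq R (0 - - F alpha (x (- t)) (z (- t)) (psi (- t))) (F alpha (x (- t)) (- z (- t)) (PI - psi (- t)))). unfold F. rewrite sin_PI_x, Rtrigo_facts.cos_pi_minus.
    replace ((- z (- t)) ^ 2) with (z (- t) ^ 2) by ring. unfold Rdiv. ring. }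
  assert (Cx : forall t, -s <= t <= s -> continuity_pt x t) by (intros; eapply der_cont; apply Dx; auto).
  assert (Cz : forall t, -s <= t <= s -> continuity_pt z t) by (intros; eapply der_cont; apply Dz; auto).
  destruct (continuity_ab_maj (fun t => Rabs (x t) + Rabs (z t)) (-s) s) as [tM [HM _]].
  { lra. }
  { intros c Hc. apply continuity_pt_plus.
    apply (continuity_pt_comp x Rabs c (Cx c Hc) (Rcontinuity_abs _)).
    apply (continuity_pt_comp z Rabs c (Cz c Hc) (Rcontinuity_abs _)). }
  destruct (continuity_ab_min (fun t => Rabs (x t)) (-s) s) as [tm [Hm Htm]].
  { lra. }
  { intros c Hc. apply (continuity_pt_comp x Rabs c (Cx c Hc) (Rcontinuity_abs _)). }
  set (M := Rabs (x tM) + Rabs (z tM)) in *.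
  set (m := Rabs (x tm)) in *.
  assert (m0 : 0 < m) by (apply Rabs_pos_lt; apply Nx; auto).
  cbv beta in HM, Hm.
  set (L := Rabs alpha * ((2 + 2*M)/(m*m) + (2*M*(2*M))/(m*m*(m*m))) + 1/m + 1/(m*m)).
  assert (L0 : 0 <= L).
  { unfold L. assert (0 < m * m) by nra. pose proof (Rabs_pos alpha).
    assert (0 <= M) by (pose proof (Rabs_pos (x tM)); pose proof (Rabs_pos (z tM)); unfold M; lra).
    apply Rplus_le_le_0_compat; [apply Rplus_le_le_0_compat|].
    - apply Rmult_le_pos; auto. apply Rplus_le_le_0_compat; unfold Rdiv; apply Rmult_le_pos; try nra;
      left; apply Rinv_0_lt_compat; nra.
    - unfold Rdiv; rewrite Rmult_1_l; left; apply Rinv_0_lt_compat; auto.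
    - unfold Rdiv; rewrite Rmult_1_l; left; apply Rinv_0_lt_compat; auto. }
  set (K := 2 + 4 * L).
  set (E := fun t => (x t - Xf t) ^ 2 + (z t - Zf t) ^ 2 + (psi t - Qf t) ^ 2).
  set (dE := fun t => 2 * (x t - Xf t) * (cos (psi t) - cos (Qf t)) + 2 * (z t - Zf t) * (sin (psi t) - sin (Qf t))
     + 2 * (psi t - Qf t) * (F alpha (x t) (z t) (psi t) - F alpha (Xf t) (Zf t) (Qf t))).
  assert (DE : forall t, -s <= t <= s -> is_derive E t (dE t)).
  { intros t Ht. unfold E, dE. apply der_add; [apply der_add|].
    - apply (der_sq (fun u => x u - Xf u)); apply der_sub; auto.
    - apply (der_sq (fun u => z u - Zf u)); apply der_sub; auto.
    - apply (der_sq (fun u => psi u - Qf u)); apply der_sub; auto. }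
  assert (Ineq : forall t, -s <= t <= s -> dE t <= K * E t).
  { intros t Ht.
    assert (Ht' : -s <= -t <= s) by lra.
    pose proof (HM t Ht) as HMt. pose proof (HM (-t) Ht') as HMt'.
    pose proof (Hm t Ht) as Hmt. pose proof (Hm (-t) Ht') as Hmt'.
    pose proof (Rabs_pos (x t)). pose proof (Rabs_pos (z t)).
    pose proof (Rabs_pos (x (-t))). pose proof (Rabs_pos (z (-t))).
    assert (A1 : m <= Rabs (Xf t)) by (unfold Xf; auto).
    assert (A2 : Rabs (Xf t) <= M) by (unfold Xf; lra).
    assert (A3 : Rabs (Zf t) <= M) by (unfold Zf; rewrite Rabs_Ropp; lra).
    assert (HL := F_lip alpha m M (x t) (z t) (psi t) (Xf t) (Zf t) (Qf t) m0 Hmt A1 ltac:(lra) ltac:(lra) A2 A3).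
    fold L in HL.
    unfold dE, E.
    set (dx := x t - Xf t) in *. set (dz := z t - Zf t) in *. set (dp := psi t - Qf t) in *.
    set (dF := F alpha (x t) (z t) (psi t) - F alpha (Xf t) (Zf t) (Qf t)) in *.
    assert (I1 : dx * (cos (psi t) - cos (Qf t)) <= Rabs dx * Rabs dp).
    { eapply Rle_trans; [apply Rle_abs|]. rewrite Rabs_mult. apply Rmult_le_compat_l; [apply Rabs_pos|apply cos_lip]. }
    assert (I2 : dz * (sin (psi t) - sin (Qf t)) <= Rabs dz * Rabs dp).
    { eapply Rle_trans; [apply Rle_abs|]. rewrite Rabs_mult. apply Rmult_le_compat_l; [apply Rabs_pos|apply sin_lip]. }
    assert (I3 : dp * dF <= Rabs dp * (L * (Rabs dx + Rabs dz + Rabs dp))).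
    { eapply Rle_trans; [apply Rle_abs|]. rewrite Rabs_mult. apply Rmult_le_compat_l; [apply Rabs_pos|auto]. }
    rewrite <- (pow2_abs dx), <- (pow2_abs dz), <- (pow2_abs dp).
    pose proof (Rabs_pos dx). pose proof (Rabs_pos dz). pose proof (Rabs_pos dp).
    set (ax := Rabs dx) in *. set (az := Rabs dz) in *. set (ap := Rabs dp) in *.
    assert (P1 : 0 <= L * (ax - ap) ^ 2) by (apply Rmult_le_pos; auto; apply pow2_ge_0).
    assert (P2 : 0 <= L * (az - ap) ^ 2) by (apply Rmult_le_pos; auto; apply pow2_ge_0).
    assert (P3 : 0 <= L * ap ^ 2) by (apply Rmult_le_pos; auto; apply pow2_ge_0).
    assert (J1 : 2 * (ax * ap) <= ax ^ 2 + ap ^ 2) by (pose proof (pow2_ge_0 (ax - ap)) as Hq; clear - Hq; nra).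
    assert (J2 : 2 * (az * ap) <= az ^ 2 + ap ^ 2) by (pose proof (pow2_ge_0 (az - ap)) as Hq; clear - Hq; nra).
    assert (J3 : 2 * (L * (ap * ax)) <= L * ax ^ 2 + L * ap ^ 2) by (clear - P1; nra).
    assert (J4 : 2 * (L * (ap * az)) <= L * az ^ 2 + L * ap ^ 2) by (clear - P2; nra).
    assert (J5 : ap * (L * (ax + az + ap)) = L * (ap * ax) + L * (ap * az) + L * ap ^ 2) by ring.
    rewrite J5 in I3.
    assert (P4 : 0 <= L * ax ^ 2) by (apply Rmult_le_pos; auto; apply pow2_ge_0).
    assert (P5 : 0 <= L * az ^ 2) by (apply Rmult_le_pos; auto; apply pow2_ge_0).
    unfold K. clear - I1 I2 I3 J1 J2 J3 J4 P3 P4 P5. nra. }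
  set (G := fun t => exp (- K * t) * E t).
  set (dG := fun t => (- K * exp (- K * t)) * E t + exp (- K * t) * dE t).
  assert (Dexp : forall t, is_derive (fun u => exp (- K * u)) t (- K * exp (- K * t))).
  { intro t. auto_derive; auto. ring. }
  assert (DG : forall t, -s <= t <= s -> is_derive G t (dG t)).
  { intros t Ht. unfold G, dG. apply (der_mul (fun u => exp (- K * u)) E); auto. }
  assert (dG_neg : forall t, 0 <= t <= s -> dG t <= 0).
  { intros t Ht. unfold dG. pose proof (Ineq t ltac:(lra)). pose proof (exp_pos (- K * t)). nra. }
  destruct (MVT_gen G 0 s dG) as [c [Hc Hmvt]].
  { intros t Ht. rewrite Rmin_left in Ht by lra. rewrite Rmax_right in Ht by lra. apply DG; lra. }
  { intros t Ht. rewrite Rmin_left in Ht by lra. rewrite Rmax_right in Ht by lra. eapply der_cont; apply DG; lra. }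
  rewrite Rmin_left in Hc by lra. rewrite Rmax_right in Hc by lra.
  assert (G0 : G 0 = 0).
  { unfold G, E, Xf, Zf, Qf. rewrite Ropp_0, Hx0, Hz0, Hp0. field. }
  assert (Gs : G s <= 0).
  { pose proof (dG_neg c Hc). nra. }
  assert (Es : E s <= 0).
  { unfold G in Gs. pose proof (exp_pos (- K * s)). nra. }
  unfold E, Xf, Zf, Qf in Es.
  pose proof (pow2_ge_0 (x s - x (- s))). pose proof (pow2_ge_0 (z s - - z (- s))).
  pose proof (pow2_ge_0 (psi s - (PI - psi (- s)))).
  assert (e1 : (x s - x (- s)) ^ 2 = 0) by lra.
  assert (e2 : (z s - - z (- s)) ^ 2 = 0) by lra.
  rewrite <- Rsqr_pow2 in e1, e2. apply Rsqr_0_uniq in e1. apply Rsqr_0_uniq in e2. split; lra.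
Qed.

Theorem mainTheorem14 (alpha a b : R) (x z psi : R -> R) :
  a < 0 < b ->
  is_solution alpha a b x z psi ->
  x 0 = 1 -> z 0 = 0 -> psi 0 = PI / 2 ->
  forall s, a < s < b -> a < - s < b ->
    x (- s) = x s /\ z (- s) = - z s.
Proof.
  intros Hab Hsol Hx0 Hz0 Hp0 s Hs1 Hs2.
  destruct (Rle_or_lt 0 s) as [Hs|Hs].
  - apply (core alpha a b x z psi s); auto; lra.
  - destruct (core alpha a b x z psi (- s)) as [H1 H2]; auto; try lra.
    rewrite Ropp_involutive in H1, H2. split; lra.
Qed.
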